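(* Let $\kappa_1<\dots<\kappa_M$ be real and let $A=(a_{k,j})$ be a real $N\times M$ matrix ($N<M$) of rank $N$ in reduced row echelon form that is totally nonnegative and irreducible, with pivot columns $I_0=\{i_1<\dots<i_N\}$. Enumerate the non-pivot nonzero entries of $A$ as $\sigma=1,\dots,\tilde g$ (data $b_\sigma,c_\sigma,\tilde\phi_\sigma$ as in the context). Define for $\sigma\ne\rho$ $$C_{\sigma,\rho}=\frac{(b_\sigma-b_\rho)(c_\sigma-c_\rho)}{(b_\sigma-c_\rho)(c_\sigma-b_\rho)}$$ (so $C_{\sigma,\rho}=0$ if the two entries lie in the same row or in the same column; formally $C_{\sigma,\rho}=e^{2\pi i\tilde\Omega_{\sigma,\rho}}$ with $\tilde\Omega_{\sigma,\rho}=+i\infty$ in that case). Then the KP $\tau$-function $\tau_A(x,y,t)=\sum_{I\in\binom{[M]}{N}}\Delta_I(A)E_I(x,y,t)$ satisfies $$\frac{\tau_A(x,y,t)}{E_{I_0}(x,y,t)}=\tilde\vartheta^{(\tilde g)}_{\tilde g}(\mathbf z;\tilde\Omega)=\sum_{\mathbf m\in\{0,1\}^{\tilde g}}\ \prod_{\sigma<\rho}C_{\sigma,\rho}^{\,m_\sigma m_\rho}\ \exp\Big(\sum_{\sigma=1}^{\tilde g}m_\sigma\tilde\phi_\sigma\Big),$$ with the convention $0^0=1$; here $2\pi i z_\sigma=\tilde\phi_\sigma(x,y,t)$.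
   Context: $\xi_j=\kappa_jx+\kappa_j^2y+\kappa_j^3t$; for $I=\{i_1<\dots<i_N\}\subset[M]$, $E_I=\prod_{a<b}(\kappa_{i_b}-\kappa_{i_a})\exp(\xi_{i_1}+\dots+\xi_{i_N})$ and $\Delta_I(A)$ is the $N\times N$ minor of $A$ on columns $I$. $A$ is totally nonnegative if all $\Delta_I(A)\ge0$; $A$ in reduced row echelon form is irreducible if each row has a nonzero entry besides its pivot and no column is zero. Row $k$ has its pivot in column $i_k$; let $j^{(k)}_1<\dots<j^{(k)}_{n_k}$ be the non-pivot columns with $a_{k,j}\ne0$, $\tilde g_k=n_1+\dots+n_k$, $\tilde g_0=0$, $\tilde g=\tilde g_N$ (the number of nonzero non-pivot entries of $A$). For $\sigma=\tilde g_{k-1}+m$ ($1\le m\le n_k$): $b_\sigma=\kappa_{i_k}$, $c_\sigma=\kappa_{j^{(k)}_m}$, $\phi_\sigma=\xi_{j^{(k)}_m}-\xi_{i_k}$, $e^{\phi^0_\sigma}=|a_{k,j^{(k)}_m}|\prod_{l\ne k}|\kappa_{i_l}-\kappa_{j^{(k)}_m}|/\prod_{l\ne k}|\kappa_{i_l}-\kappa_{i_k}|$, and $\tilde\phi_\sigma=\phi_\sigma+\phi^0_\sigma$. *)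

(* Defs.v *)
From HB Require Import structures.
From mathcomp Require Import all_boot all_order all_algebra.
From mathcomp Require Import reals sequences exp.
Set Implicit Arguments. Unset Strict Implicit. Unset Printing Implicit Defensive.
Import Order.TTheory GRing.Theory Num.Theory.
Local Open Scope ring_scope.

Definition xi (R : realType) (M : nat) (kappa : 'I_M -> R) (j : 'I_M) (x y t : R) : R :=
  kappa j * x + kappa j ^+ 2 * y + kappa j ^+ 3 * t.

Definition E_I (R : realType) (M : nat) (kappa : 'I_M -> R) (I : {set 'I_M}) (x y t : R) : R :=
  (\prod_(a in I) \prod_(b in I | (a < b)%N) (kappa b - kappa a))
  * expR (\sum_(j in I) xi kappa j x y t).

Definition minor (R : realType) (N M : nat) (A : 'M[R]_(N, M)) (I : {set 'I_M}) : R :=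
  \det (\matrix_(i < N, k < N) nth 0 [seq A i j | j <- enum I] k).

Definition tau (R : realType) (N M : nat) (kappa : 'I_M -> R) (A : 'M[R]_(N, M)) (x y t : R) : R :=
  \sum_(I : {set 'I_M} | #|I| == N) minor A I * E_I kappa I x y t.

Definition totally_nonnegative (R : realType) (N M : nat) (A : 'M[R]_(N, M)) : Prop :=
  forall I : {set 'I_M}, #|I| = N -> 0 <= minor A I.

Definition rref_with_pivots (R : realType) (N M : nat) (A : 'M[R]_(N, M)) (piv : 'I_N -> 'I_M) : Prop :=
  [/\ forall k l : 'I_N, (k < l)%N -> (piv k < piv l)%N,
      forall k : 'I_N, A k (piv k) = 1,
      forall k l : 'I_N, l != k -> A l (piv k) = 0
    & forall (k : 'I_N) (j : 'I_M), (j < piv k)%N -> A k j = 0].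

Definition irreducible_rref (R : realType) (N M : nat) (A : 'M[R]_(N, M)) (piv : 'I_N -> 'I_M) : Prop :=
  (forall k : 'I_N, exists j : 'I_M, j != piv k /\ A k j != 0) /\
  (forall j : 'I_M, exists k : 'I_N, A k j != 0).

Definition pivot_set (N M : nat) (piv : 'I_N -> 'I_M) : {set 'I_M} := [set piv k | k : 'I_N].

Definition entries (R : realType) (N M : nat) (A : 'M[R]_(N, M)) (piv : 'I_N -> 'I_M)
  : seq ('I_N * 'I_M) :=
  [seq (k, j) | k <- enum 'I_N,
                j <- [seq j <- enum 'I_M | (j \notin pivot_set piv) && (A k j != 0)]].

Definition gtilde (R : realType) (N M : nat) (A : 'M[R]_(N, M)) (piv : 'I_N -> 'I_M) : nat :=
  size (entries A piv).

Definition entry (R : realType) (N M : nat) (A : 'M[R]_(N, M)) (piv : 'I_N -> 'I_M)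
  (s : 'I_(gtilde A piv)) : 'I_N * 'I_M :=
  tnth (in_tuple (entries A piv)) s.

Definition b_ (R : realType) (N M : nat) (kappa : 'I_M -> R) (A : 'M[R]_(N, M)) (piv : 'I_N -> 'I_M)
  (s : 'I_(gtilde A piv)) : R := kappa (piv (entry s).1).

Definition c_ (R : realType) (N M : nat) (kappa : 'I_M -> R) (A : 'M[R]_(N, M)) (piv : 'I_N -> 'I_M)
  (s : 'I_(gtilde A piv)) : R := kappa (entry s).2.

Definition phi_ (R : realType) (N M : nat) (kappa : 'I_M -> R) (A : 'M[R]_(N, M)) (piv : 'I_N -> 'I_M)
  (s : 'I_(gtilde A piv)) (x y t : R) : R :=
  xi kappa (entry s).2 x y t - xi kappa (piv (entry s).1) x y t.

Definition phi0_ (R : realType) (N M : nat) (kappa : 'I_M -> R) (A : 'M[R]_(N, M)) (piv : 'I_N -> 'I_M)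
  (s : 'I_(gtilde A piv)) : R :=
  let k := (entry s).1 in let j := (entry s).2 in
  ln (`|A k j| * (\prod_(l : 'I_N | l != k) `|kappa (piv l) - kappa j|)
      / \prod_(l : 'I_N | l != k) `|kappa (piv l) - kappa (piv k)|).

Definition phit_ (R : realType) (N M : nat) (kappa : 'I_M -> R) (A : 'M[R]_(N, M)) (piv : 'I_N -> 'I_M)
  (s : 'I_(gtilde A piv)) (x y t : R) : R :=
  phi_ kappa s x y t + phi0_ kappa s.

Definition C_ (R : realType) (N M : nat) (kappa : 'I_M -> R) (A : 'M[R]_(N, M)) (piv : 'I_N -> 'I_M)
  (s r : 'I_(gtilde A piv)) : R :=
  ((b_ kappa s - b_ kappa r) * (c_ kappa s - c_ kappa r))
  / ((b_ kappa s - c_ kappa r) * (c_ kappa s - b_ kappa r)).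

(* theta~^{(g)}_g with 2 pi i z_sigma = phit_sigma; 0^0 = 1 via the nat power x ^+ 0 = 1 *)
Definition theta_tilde (R : realType) (g : nat) (C : 'I_g -> 'I_g -> R) (phit : 'I_g -> R) : R :=
  \sum_(m : {ffun 'I_g -> bool})
    (\prod_(s < g) \prod_(r < g | (s < r)%N) C s r ^+ (m s * m r)%N)
    * expR (\sum_(s < g) (m s)%:R * phit s).

(* Main.v *)
Require Import Defs.
From HB Require Import structures.
From mathcomp Require Import all_boot all_order all_algebra.
From mathcomp Require Import reals sequences exp.
From mathcomp Require Import all_fingroup ring.
Import Order.TTheory GRing.Theory Num.Theory.
Local Open Scope ring_scope.
Set Implicit Arguments. Unset Strict Implicit.

Lemma prod_pairs (R : comPzRingType) n (F : 'I_n -> 'I_n -> R) :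
  \prod_(k < n) \prod_(l < n | l != k) F k l =
  \prod_(k < n) \prod_(l < n | (k < l)%N) (F k l * F l k).
Proof.
have -> : \prod_(k < n) \prod_(l < n | l != k) F k l =
  \prod_(k < n) (\prod_(l < n | (k < l)%N) F k l * \prod_(l < n | (l < k)%N) F k l).
  apply: eq_bigr => k _; rewrite (bigID (fun l : 'I_n => (k < l)%N)) /=.
  congr (_ * _); apply: eq_bigl => l.
    case: (ltngtP k l) => [h|h|h] /=; rewrite ?andbT ?andbF //.
    by rewrite neq_ltn h orbT.
  case: (ltngtP k l) => [h|h|h] /=; rewrite ?andbT ?andbF //.
    by rewrite neq_ltn h.
  by rewrite (val_inj h) eqxx.
rewrite big_split /=; under [RHS]eq_bigr do rewrite big_split /=.
rewrite big_split /=; congr (_ * _).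
rewrite (eq_bigr (fun k : 'I_n => \prod_(l < n) if (l < k)%N then F k l else 1)); last by move=> k _; rewrite big_mkcond.
rewrite exchange_big /=; apply: eq_bigr => l _; by rewrite [RHS]big_mkcond.
Qed.


Definition Ch (F : fieldType) n (x y : 'I_n -> F) k l :=
  ((y k - y l) * (x k - x l)) / ((y k - x l) * (x k - y l)).

Lemma core_id (F : fieldType) n (x y : 'I_n -> F) :
 (forall k l, k != l -> y k != y l) ->
 (forall k l, k != l -> x k != y l) ->
 \prod_(a < n) \prod_(b < n | (a < b)%N) (x b - x a) =
 (\prod_(a < n) \prod_(b < n | (a < b)%N) (y b - y a)) *
 (\prod_(k < n) \prod_(l < n | (k < l)%N) Ch x y k l) *
 \prod_(k < n) ((\prod_(l < n | l != k) (y l - x k)) / \prod_(l < n | l != k) (y l - y k)).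
Proof.
move=> Hy Hx.
have -> : \prod_(k < n) ((\prod_(l < n | l != k) (y l - x k)) / \prod_(l < n | l != k) (y l - y k))
   = \prod_(k < n) \prod_(l < n | l != k) ((y l - x k) / (y l - y k)).
  by apply: eq_bigr => k _; rewrite big_split /= prodfV.
rewrite prod_pairs -!big_split /=; apply: eq_bigr => k _.
rewrite -!big_split /=; apply: eq_bigr => l kl.
have nkl : k != l by rewrite neq_ltn kl.
have nlk : l != k by rewrite eq_sym.
have h1 := Hy _ _ nkl; have h2 := Hx _ _ nkl; have h3 := Hx _ _ nlk.
rewrite /Ch; field.
by rewrite !subr_eq0 h1 h2 (eq_sym (y l)) h1 (eq_sym (y k)) h3.
Qed.

Definition Lk (F : fieldType) n (x y : 'I_n -> F) k :=
  (\prod_(l < n | l != k) (y l - x k)) / \prod_(l < n | l != k) (y l - y k).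

Lemma prod_ne0 (F : fieldType) n (G : 'I_n -> F) k :
  (forall l, l != k -> G l != 0) -> \prod_(l < n | l != k) G l != 0.
Proof.
by move=> h; rewrite prodf_seq_neq0; apply/allP => l _; apply/implyP => /h.
Qed.

Lemma Lk1 (F : fieldType) n (x y : 'I_n -> F) k :
  (forall k l, k != l -> y k != y l) -> x k = y k -> Lk x y k = 1.
Proof.
move=> hy e; rewrite /Lk e divff //; apply: prod_ne0 => l lk.
by rewrite subr_eq0 hy.
Qed.

Lemma Lk_ne0 (F : fieldType) n (x y : 'I_n -> F) k :
  (forall k l, k != l -> y k != y l) -> (forall k l, k != l -> x k != y l) ->
  Lk x y k != 0.
Proof.
move=> hy hx; rewrite /Lk mulf_neq0 // ?invr_eq0; apply: prod_ne0 => l lk.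
  by rewrite subr_eq0 eq_sym hx // eq_sym.
by rewrite subr_eq0 hy.
Qed.

Lemma Ch1 (F : fieldType) n (x y : 'I_n -> F) k l :
  (forall k l, k != l -> y k != y l) -> (forall k l, k != l -> x k != y l) ->
  k != l -> (x k = y k \/ x l = y l) -> Ch x y k l = 1.
Proof.
move=> hy hx kl; have lk : l != k by rewrite eq_sym.
have h1 := hy _ _ kl; have h2 := hx _ _ kl; have h3 := hx _ _ lk.
case=> e; rewrite /Ch ?e.
- rewrite [X in _ / X]mulrC divff // mulf_neq0 // subr_eq0 // eq_sym //.
- by rewrite divff // mulf_neq0 // subr_eq0.
Qed.

Definition Vd (R : comPzRingType) n (h : 'I_n -> R) : R :=
  \prod_(a < n) \prod_(b < n | (a < b)%N) (h b - h a).

Lemma enum_sorted M (I : {set 'I_M}) : sorted (fun a b : 'I_M => (a < b)%N) (enum I).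
Proof.
have : sorted ltn (map val (enum 'I_M)) by rewrite val_enum_ord iota_ltn_sorted.
rewrite sorted_map => h.
rewrite /enum_mem -enumT; apply: sorted_filter => //.
by move=> a b c; apply: ltn_trans.
Qed.

Lemma mono_inj n m (e : 'I_n -> 'I_m) : (forall k k' : 'I_n, (k < k')%N -> (e k < e k')%N) -> injective e.
Proof.
move=> he k k' ekk; apply/eqP; case: (ltngtP k k') => [l|l|l].
- by have := he _ _ l; rewrite ekk ltnn.
- by have := he _ _ l; rewrite ekk ltnn.
- exact/eqP/val_inj.
Qed.

Lemma mono_lt n m (e : 'I_n -> 'I_m) : (forall k k' : 'I_n, (k < k')%N -> (e k < e k')%N) ->
  forall k k' : 'I_n, ((e k < e k')%N = (k < k')%N).
Proof.
move=> he k k'; case: (ltngtP k k') => [l|l|l].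
- exact: he.
- by apply/negbTE; rewrite -leqNgt ltnW // he.
- by rewrite (val_inj l) ltnn.
Qed.

Lemma E_reindex (R : realType) N M (kappa : 'I_M -> R) (e : 'I_N -> 'I_M) x y t :
  (forall k k' : 'I_N, (k < k')%N -> (e k < e k')%N) ->
  E_I kappa [set e k | k : 'I_N] x y t =
  Vd (fun k => kappa (e k)) * expR (\sum_k xi kappa (e k) x y t).
Proof.
move=> he; have einj := mono_inj he.
rewrite /E_I /Vd big_imset /=; last by move=> a b _ _; apply: einj.
rewrite big_imset /=; last by move=> a b _ _; apply: einj.
congr (_ * _); apply: eq_bigr => k _.
rewrite [LHS]big_mkcondr big_imset /=; last by move=> a b _ _; apply: einj.
rewrite [RHS]big_mkcond /=; apply: eq_bigr => k' _.
by rewrite mono_lt.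
Qed.

Lemma perm_imset_eq n m (e : 'I_n -> 'I_m) (f : {ffun 'I_n -> 'I_m}) :
  injective e ->
  ([set f k | k : 'I_n] == [set e k | k : 'I_n]) =
  (f \in [set [ffun k => e (s k)] | s : 'S_n]).
Proof.
move=> einj; apply/eqP/imsetP.
- move=> H.
  have cf : #|[set f k | k : 'I_n]| == #|'I_n|.
    by rewrite H card_imset // card_ord -[X in _ == X]card_ord.
  have finj : injective f.
    by move: cf => /imset_injP finj' a b; apply: finj'.
  have ex : forall k, exists k', e k' == f k.
    move=> k; have : f k \in [set e k | k : 'I_n] by rewrite -H; apply/imsetP; exists k.
    by case/imsetP => k' _ ->; exists k'.
  pose g k := odflt k [pick k' | e k' == f k].
  have ge : forall k, e (g k) = f k.
    move=> k; rewrite /g; case: pickP => [k' /eqP //|] /= h.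
    by case: (ex k) => k' hk; rewrite h in hk.
  have ginj : injective g.
    by move=> a b gab; apply: finj; rewrite -!ge gab.
  exists (perm ginj) => //; apply/ffunP => k; rewrite ffunE permE.
  by rewrite ge.
- case=> s _ -> {f}; apply/setP => z; apply/imsetP/imsetP.
  + by case=> k _ ->; rewrite ffunE; exists (s k).
  + case=> k _ ->; exists ((s^-1)%g k) => //; rewrite ffunE.
    by rewrite permKV.
Qed.

Lemma Vd_perm (R : comPzRingType) n (h : 'I_n -> R) (s : 'S_n) :
  Vd (fun k => h (s k)) = (-1) ^+ s * Vd h.
Proof.
rewrite /Vd.
have E1 := det_Vandermonde (\row_j h (s j)).
have E2 := det_Vandermonde (\row_j h j).
rewrite !(eq_bigr _ (fun i _ => eq_bigr _ (fun j _ => congr2 (fun a b => a - b) (mxE _ _ 0 j) (mxE _ _ 0 i)))) in E1 E2.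
rewrite -E1 -E2.
have -> : Vandermonde n (\row_j h (s j)) = col_perm s (Vandermonde n (\row_j h j)).
  by apply/matrixP => i j; rewrite !mxE.
by rewrite col_permE det_mulmx det_perm odd_permV mulrC.
Qed.

Definition Gf (R : realType) N M (kappa : 'I_M -> R) (A : 'M[R]_(N, M))
  (f : {ffun 'I_N -> 'I_M}) x y t : R :=
  (\prod_k A k (f k)) * Vd (fun k => kappa (f k)) * expR (\sum_k xi kappa (f k) x y t).

Lemma minor_E (R : realType) N M (kappa : 'I_M -> R) (A : 'M[R]_(N, M))
  (I : {set 'I_M}) x y t (x0 : 'I_M) : #|I| = N ->
  minor A I * E_I kappa I x y t =
  \sum_(f : {ffun 'I_N -> 'I_M} | [set f k | k : 'I_N] == I) Gf kappa A f x y t.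
Proof.
move=> cI.
pose e (k : 'I_N) := nth x0 (enum I) k.
have sz : size (enum I) = N by rewrite -cardE.
have he : forall k k' : 'I_N, (k < k')%N -> (e k < e k')%N.
  move=> k k' kk'; rewrite /e.
  apply: (sorted_ltn_nth (leT := fun a b : 'I_M => (a < b)%N)) => //.
  - by move=> a b c; apply: ltn_trans.
  - exact: enum_sorted.
  - by rewrite inE sz.
  - by rewrite inE sz.
have einj := mono_inj he.
have EI : I = [set e k | k : 'I_N].
  apply/eqP; rewrite eq_sym eqEcard; apply/andP; split.
    apply/subsetP => z /imsetP [k _ ->]; rewrite /e -mem_enum mem_nth // sz.
    by [].
  by rewrite card_imset // card_ord cI.
have -> : minor A I = \det (\matrix_(i < N, k < N) A i (e k)).
  rewrite /minor; congr (\det _); apply/matrixP => i k; rewrite !mxE.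
  by rewrite (nth_map x0) // sz.
rewrite EI E_reindex //.
rewrite (eq_bigl (fun f => f \in [set [ffun k => e (s k)] | s : 'S_N])); last first.
  by move=> f; rewrite perm_imset_eq.
rewrite big_imset /=; last first.
  move=> s s' _ _ /ffunP hs; apply/permP => k.
  by have := hs k; rewrite !ffunE => /einj.
rewrite /determinant big_distrl /=; apply: eq_bigr => s _.
rewrite /Gf.
under [in RHS]eq_bigr do rewrite ffunE.
have -> : Vd (fun k => kappa ([ffun k0 => e (s k0)] k)) = Vd (fun k => kappa (e (s k))).
  by rewrite /Vd; apply: eq_bigr => a _; apply: eq_bigr => b _; rewrite !ffunE.
have -> : \sum_k xi kappa ([ffun k0 => e (s k0)] k) x y t = \sum_k xi kappa (e (s k)) x y t.
  by apply: eq_bigr => a _; rewrite !ffunE.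
rewrite (Vd_perm (fun k => kappa (e k)) s).
have -> : \sum_k xi kappa (e (s k)) x y t = \sum_k xi kappa (e k) x y t.
  by rewrite [RHS](reindex_inj (@perm_inj _ s)).
under eq_bigr do rewrite mxE.
by rewrite !mulrA; congr (_ * _); congr (_ * _); apply: mulrC.
Qed.

Lemma Vd0 (R : comPzRingType) n (h : 'I_n -> R) (a b : 'I_n) :
  a != b -> h a = h b -> Vd h = 0.
Proof.
wlog lt_ab : a b / (a < b)%N.
  move=> W ne e; case: (ltngtP a b) => [l|l|l]; first exact: W l ne e.
    by apply: (W b a) => //; rewrite eq_sym.
  by rewrite (val_inj l) eqxx in ne.
move=> _ e; rewrite /Vd (bigD1 a) //= (bigD1 b) //= e subrr mul0r mul0r.
by [].
Qed.

Lemma Gf_noninj (R : realType) N M (kappa : 'I_M -> R) (A : 'M[R]_(N, M))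
  (f : {ffun 'I_N -> 'I_M}) x y t : ~~ injectiveb f -> Gf kappa A f x y t = 0.
Proof.
case/injectivePn => a [b ab fab].
by rewrite /Gf (@Vd0 _ _ _ a b) // ?fab // mulr0 mul0r.
Qed.

Lemma tau_E (R : realType) N M (kappa : 'I_M -> R) (A : 'M[R]_(N, M)) x y t (x0 : 'I_M) :
  tau kappa A x y t = \sum_(f : {ffun 'I_N -> 'I_M}) Gf kappa A f x y t.
Proof.
rewrite /tau (bigID (fun f : {ffun 'I_N -> 'I_M} => #|[set f k | k : 'I_N]| == N)) /=.
rewrite [X in _ = _ + X]big1 ?addr0; last first.
  move=> f hf; apply: Gf_noninj; apply/injectiveP => finj.
  by move: hf; rewrite card_imset // card_ord eqxx.
rewrite (partition_big (fun f : {ffun 'I_N -> 'I_M} => [set f k | k : 'I_N])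
   (fun I : {set 'I_M} => #|I| == N)) //=.
apply: eq_bigr => I /eqP cI; rewrite (@minor_E _ _ _ kappa A I x y t x0 cI).
apply: eq_bigl => f; case: eqP => [->|]; rewrite ?cI ?eqxx //.
by rewrite andbF.
Qed.

Lemma entries_mem (R : realType) N M (A : 'M[R]_(N, M)) piv k j :
  ((k, j) \in entries A piv) = (j \notin pivot_set piv) && (A k j != 0).
Proof.
apply/allpairsPdep/idP.
  by case=> k' [j' [_ hj [-> ->]]]; move: hj; rewrite mem_filter => /andP [].
move=> h; exists k, j; split => //; first by rewrite mem_enum.
by rewrite mem_filter h mem_enum.
Qed.

Lemma entries_uniq (R : realType) N M (A : 'M[R]_(N, M)) piv : uniq (entries A piv).
Proof.
apply: allpairs_uniq_dep.
- exact: enum_uniq.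
- by move=> k _; apply: filter_uniq; apply: enum_uniq.
- by move=> [k1 j1] [k2 j2] _ _ /= [e1 e2]; subst.
Qed.

Lemma entry_mem (R : realType) N M (A : 'M[R]_(N, M)) piv (s : 'I_(gtilde A piv)) :
  entry s \in entries A piv.
Proof. exact: mem_tnth. Qed.

Lemma entry_inj (R : realType) N M (A : 'M[R]_(N, M)) piv : injective (@entry R N M A piv).
Proof.
move=> s r; rewrite /entry !(tnth_nth (entry s)) /= => e.
apply/val_inj/eqP; rewrite -(nth_uniq (entry s) _ _ (entries_uniq A piv)) ?e //; apply: ltn_ord.
Qed.

Lemma entry_surj (R : realType) N M (A : 'M[R]_(N, M)) piv k j :
  (k, j) \in entries A piv -> exists s : 'I_(gtilde A piv), entry s = (k, j).
Proof.
move=> h; have hi : (index (k, j) (entries A piv) < gtilde A piv)%N by rewrite index_mem.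
exists (Ordinal hi); rewrite /entry (tnth_nth (k, j)) /=.
exact: nth_index.
Qed.

Definition Fm (R : realType) N M (A : 'M[R]_(N, M)) piv
  (m : {ffun 'I_(gtilde A piv) -> bool}) : {ffun 'I_N -> 'I_M} :=
  [ffun k => if [pick s | m s && ((entry s).1 == k)] is Some s then (entry s).2 else piv k].

Definition mf (R : realType) N M (A : 'M[R]_(N, M)) piv
  (f : {ffun 'I_N -> 'I_M}) : {ffun 'I_(gtilde A piv) -> bool} :=
  [ffun s => f (entry s).1 == (entry s).2].

Definition good (R : realType) N M (A : 'M[R]_(N, M)) piv (f : {ffun 'I_N -> 'I_M}) :=
  [forall k, (f k == piv k) || ((f k \notin pivot_set piv) && (A k (f k) != 0))].

Lemma entry_np (R : realType) N M (A : 'M[R]_(N, M)) piv (s : 'I_(gtilde A piv)) :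
  ((entry s).2 \notin pivot_set piv) && (A (entry s).1 (entry s).2 != 0).
Proof. by rewrite -entries_mem -surjective_pairing entry_mem. Qed.

Lemma piv_in N M (piv : 'I_N -> 'I_M) k : piv k \in pivot_set piv.
Proof. by apply/imsetP; exists k. Qed.

Lemma Fm_good (R : realType) N M (A : 'M[R]_(N, M)) piv (m : {ffun 'I_(gtilde A piv) -> bool}) : good A piv (Fm m).
Proof.
apply/forallP => k; rewrite ffunE; case: pickP => [s /andP [_ /eqP <-]|_].
  by rewrite entry_np orbT.
by rewrite eqxx.
Qed.

Lemma Fm_mf (R : realType) N M (A : 'M[R]_(N, M)) piv f :
  good A piv f -> Fm (mf A piv f) = f.
Proof.
move=> /forallP gf; apply/ffunP => k; rewrite ffunE; case: pickP => [s|h].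
  by rewrite ffunE => /andP [/eqP e /eqP <-]; rewrite e.
case/orP: (gf k) => [/eqP -> //|hk].
have /entry_surj [s es] : (k, f k) \in entries A piv by rewrite entries_mem.
by have := h s; rewrite ffunE es /= !eqxx.
Qed.

Lemma mf_Fm (R : realType) N M (A : 'M[R]_(N, M)) piv (m : {ffun 'I_(gtilde A piv) -> bool}) :
  (forall s r, m s -> m r -> (entry s).1 = (entry r).1 -> s = r) ->
  mf A piv (Fm m) = m.
Proof.
move=> dr; apply/ffunP => s; rewrite !ffunE; case: pickP => [r /andP [mr /eqP er]|h].
  case ms: (m s).
    by rewrite (dr _ _ ms mr (esym er)) eqxx.
  apply/negbTE/eqP => e; move: ms; suff -> : s = r by rewrite mr.
  by apply: entry_inj; rewrite [entry s]surjective_pairing [entry r]surjective_pairing er e.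
case ms: (m s); first by have := h s; rewrite ms eqxx.
apply/negbTE/eqP => e; have := entry_np s; rewrite -e piv_in.
by [].
Qed.

Definition term (R : realType) N M (kappa : 'I_M -> R) (A : 'M[R]_(N, M)) piv x y t
  (m : {ffun 'I_(gtilde A piv) -> bool}) : R :=
  (\prod_(s < gtilde A piv) \prod_(r < gtilde A piv | (s < r)%N) C_ kappa s r ^+ (m s * m r)%N)
  * expR (\sum_(s < gtilde A piv) (m s)%:R * phit_ kappa s x y t).

Lemma theta_term (R : realType) N M (kappa : 'I_M -> R) (A : 'M[R]_(N, M)) piv x y t :
  theta_tilde (C_ kappa (A:=A) (piv:=piv)) (fun s => phit_ kappa s x y t)
  = \sum_(m : {ffun 'I_(gtilde A piv) -> bool}) term kappa x y t m.
Proof. by []. Qed.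

Lemma term0 (R : realType) N M (kappa : 'I_M -> R) (A : 'M[R]_(N, M)) piv x y t
  (m : {ffun 'I_(gtilde A piv) -> bool}) s r :
  m s -> m r -> s != r -> (entry s).1 = (entry r).1 -> term kappa x y t m = 0.
Proof.
wlog lt_sr : s r / (s < r)%N.
  move=> W ms mr ne e; case: (ltngtP s r) => [l|l|l]; first exact: W l ms mr ne e.
    by apply: (W r s) => //; rewrite eq_sym.
  by rewrite (val_inj l) eqxx in ne.
move=> ms mr _ e.
have C0 : C_ kappa s r = 0 by rewrite /C_ /b_ e subrr !mul0r.
by rewrite /term (bigD1 s) //= (bigD1 r) //= ms mr C0 expr1 !mul0r.
Qed.

Lemma Gf_bad (R : realType) N M (kappa : 'I_M -> R) (A : 'M[R]_(N, M)) piv x y t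
  (f : {ffun 'I_N -> 'I_M}) :
  (forall k l : 'I_N, l != k -> A l (piv k) = 0) -> ~~ good A piv f -> Gf kappa A f x y t = 0.
Proof.
move=> H /forallPn [k]; rewrite negb_or => /andP [nk h].
have A0 : A k (f k) = 0.
  case: (boolP (f k \in pivot_set piv)) => [/imsetP [k' _ e]|np].
    rewrite e H //; apply: contraNneq nk => ek.
    by rewrite e ek.
  by move: h; rewrite np /= negbK => /eqP.
by rewrite /Gf (bigD1 k) //= A0 !mul0r.
Qed.

Lemma sum_reduce (R : realType) N M (kappa : 'I_M -> R) (A : 'M[R]_(N, M)) piv x y t (E0 : R) :
  (forall k l : 'I_N, l != k -> A l (piv k) = 0) ->
  (forall f, good A piv f -> Gf kappa A f x y t = E0 * term kappa x y t (mf A piv f)) ->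
  \sum_(f : {ffun 'I_N -> 'I_M}) Gf kappa A f x y t =
  E0 * \sum_(m : {ffun 'I_(gtilde A piv) -> bool}) term kappa x y t m.
Proof.
move=> HA0 Hg.
rewrite (partition_big (@Fm _ _ _ A piv) (fun _ => true)) //= big_distrr /=.
apply: eq_bigr => f _.
case: (boolP (good A piv f)) => gf; last first.
  rewrite (@Gf_bad _ _ _ kappa A piv x y t f HA0 gf) big1 ?mulr0 // => m /eqP e.
  by move: gf; rewrite -e Fm_good.
rewrite (bigD1 (mf A piv f)) /=; last by rewrite Fm_mf.
rewrite big1 ?addr0; first exact: Hg.
move=> m /andP [/eqP Fe ne].
case: (boolP [forall s, forall r, m s ==> m r ==> ((entry s).1 == (entry r).1) ==> (s == r)]) => dr.
  have : mf A piv (Fm m) = m.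
    apply: mf_Fm => s r ms mr e.
    by move/forallP: dr => /(_ s) /forallP /(_ r); rewrite ms mr e eqxx /= => /eqP.
  by rewrite Fe => emf; rewrite emf eqxx in ne.
move/forallPn: dr => [s /forallPn [r]].
case: (m s) / boolP => ms //=; case: (m r) / boolP => mr //=.
case: eqP => //= e hsr.
exact: (@term0 _ _ _ kappa A piv x y t m s r ms mr hsr e).
Qed.

Lemma sym_swap (R : comPzRingType) g (S : pred 'I_g) (G : 'I_g -> 'I_g -> R) (rk : 'I_g -> nat) :
  (forall s r, G s r = G r s) -> {in S &, injective rk} ->
  \prod_(s | S s) \prod_(r | S r && (s < r)%N) G s r =
  \prod_(s | S s) \prod_(r | S r && (rk s < rk r)%N) G s r.
Proof.
move=> Gs rinj.
rewrite !pair_big_dep /=.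
rewrite (bigID (fun p : 'I_g * 'I_g => (rk p.1 < rk p.2)%N)) /=.
rewrite [RHS](bigID (fun p : 'I_g * 'I_g => (p.1 < p.2)%N)) /=.
congr (_ * _).
  apply: eq_bigl => -[a b] /=; case: (S a); case: (S b) => //=.
  by rewrite andbC.
rewrite (reindex_inj (h := fun p : 'I_g * 'I_g => (p.2, p.1))); last first.
  by move=> [a b] [c d] /= [-> ->].
apply: eq_big => [[a b]|[a b] _] /=; last exact: Gs.
case Sa: (S a); case Sb: (S b) => //=.
have hne : a != b -> rk a != rk b.
  by apply: contra => /eqP e; apply/eqP; apply: rinj; rewrite ?inE.
case: (ltngtP a b) => [l|l|l] /=.
- by rewrite andbF.
- have nab : a != b by rewrite neq_ltn l orbT.
  have := hne nab; rewrite andbT.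
  by case: (ltngtP (rk a) (rk b)).
- by rewrite (val_inj l) ltnn.
Qed.

Lemma big_rows (R : realType) N M (A : 'M[R]_(N, M)) piv (f : {ffun 'I_N -> 'I_M})
  (T : Type) (idx : T) (op : Monoid.com_law idx) (H : 'I_N -> T) :
  good A piv f ->
  \big[op/idx]_(s | mf A piv f s) H (entry s).1 = \big[op/idx]_(k | f k != piv k) H k.
Proof.
move=> /forallP gf.
pose S := [set s | mf A piv f s].
have inj : {in S &, injective (fun s => (entry s).1)}.
  move=> s r; rewrite !inE !ffunE => /eqP es /eqP er e.
  apply: entry_inj.
  by rewrite [entry s]surjective_pairing [entry r]surjective_pairing -es -er e.
have img : [set (entry s).1 | s in S] = [set k | f k != piv k].
  apply/setP => k; rewrite inE; apply/imsetP/idP.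
    case=> s; rewrite inE ffunE => /eqP es ->.
    apply/eqP => e; have := entry_np s; rewrite -es e piv_in.
    by [].
  move=> hk; have := gf k; rewrite (negbTE hk) /= => h.
  have /entry_surj [s es] : (k, f k) \in entries A piv by rewrite entries_mem.
  exists s => //; rewrite ?inE ?ffunE es ?eqxx //.
rewrite (eq_bigl (fun k => k \in [set (entry s).1 | s in S])); last first.
  by move=> k; rewrite img inE.
rewrite big_imset //=; apply: eq_bigl => s.
by rewrite inE.
Qed.

Lemma kappa_inj (R : realType) M (kappa : 'I_M -> R) :
  (forall i j : 'I_M, (i < j)%N -> kappa i < kappa j) -> injective kappa.
Proof.
move=> Hk i j e; case: (ltngtP i j) => [l|l|l].
- by have := Hk _ _ l; rewrite e ltxx.
- by have := Hk _ _ l; rewrite e ltxx.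
- exact: val_inj.
Qed.

Lemma C_sym (R : realType) N M (kappa : 'I_M -> R) (A : 'M[R]_(N, M)) (piv : 'I_N -> 'I_M) (s r : 'I_(gtilde A piv)) :
  C_ kappa (A:=A) (piv:=piv) s r = C_ kappa r s.
Proof.
rewrite /C_; congr (_ / _).
  by rewrite -mulrNN !opprB.
by rewrite mulrC -mulrNN !opprB.
Qed.

Lemma Gf_good (R : realType) N M (kappa : 'I_M -> R) (A : 'M[R]_(N, M)) (piv : 'I_N -> 'I_M) (x y t : R)
  (f : {ffun 'I_N -> 'I_M}) :
  (forall i j : 'I_M, (i < j)%N -> kappa i < kappa j) ->
  (forall k l : 'I_N, (k < l)%N -> (piv k < piv l)%N) ->
  (forall k, A k (piv k) = 1) ->
  good A piv f ->
  (forall k, f k != piv k ->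
     0 < A k (f k) * Lk (fun k => kappa (f k)) (fun k => kappa (piv k)) k) ->
  Gf kappa A f x y t = E_I kappa (pivot_set piv) x y t * term kappa x y t (mf A piv f).
Proof.
move=> Hk Hp H1 gf Hs.
have gf' := gf; move/forallP: gf' => gfk.
set X := fun k => kappa (f k); set Y := fun k => kappa (piv k).
have kinj := kappa_inj Hk; have pinj := mono_inj Hp.
have hY : forall k l, k != l -> Y k != Y l.
  by move=> k l kl; apply: contra kl => /eqP /kinj /pinj ->.
have hX : forall k l, k != l -> X k != Y l.
  move=> k l kl; case/orP: (gfk k) => [/eqP e|/andP [np _]].
    by rewrite /X e; apply: hY.
  apply: contra np => /eqP /kinj ->; exact: piv_in.
have mfE : forall s, mf A piv f s -> f (entry s).1 = (entry s).2.
  by move=> s; rewrite ffunE => /eqP.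
have rinj : {in [pred s | mf A piv f s] &, injective (fun s => (entry s).1)}.
  move=> s r ms mr e; apply: entry_inj.
  by rewrite [entry s]surjective_pairing [entry r]surjective_pairing -mfE // -mfE // e.
have EC : \prod_(s < gtilde A piv) \prod_(r < gtilde A piv | (s < r)%N)
    C_ kappa s r ^+ (mf A piv f s * mf A piv f r)%N =
    \prod_(k < N) \prod_(l < N | (k < l)%N) Ch X Y k l.
  transitivity (\prod_(s | mf A piv f s) \prod_(r | mf A piv f r && (s < r)%N) C_ kappa s r).
    rewrite (bigID (fun s => mf A piv f s)) /= [X in _ * X]big1 ?mulr1.
      apply: eq_bigr => s ms; rewrite [RHS]big_mkcondl; apply: eq_bigr => r _.
      by rewrite ms; case: (mf A piv f r); rewrite /= ?expr1 ?expr0.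
    by move=> s /negbTE ms; apply: big1 => r _; rewrite ms mul0n expr0.
  rewrite (@sym_swap _ _ _ _ (fun s => (entry s).1)); [ | exact: C_sym | ]; last first.
    move=> s r ms mr e; by apply: rinj => //; apply: val_inj.
  transitivity (\prod_(s | mf A piv f s) \prod_(r | mf A piv f r)
      (if ((entry s).1 < (entry r).1)%N then Ch X Y (entry s).1 (entry r).1 else 1)).
    apply: eq_bigr => s ms; rewrite big_mkcondr; apply: eq_bigr => r mr.
    case: ifP => // _.
    by rewrite /C_ /b_ /c_ /Ch /X /Y -(mfE _ ms) -(mfE _ mr).
  under eq_bigr do rewrite (big_rows _ (fun l => if (_ < l)%N then Ch X Y _ l else 1) gf).
  rewrite (big_rows _ (fun k => \prod_(l | f l != piv l) if (k < l)%N then Ch X Y k l else 1) gf).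
  rewrite [RHS](bigID (fun k => f k != piv k)) /= [X in _ = _ * X]big1 ?mulr1; last first.
    move=> k /negPn /eqP fk; apply: big1 => l kl; apply: Ch1 => //.
      by rewrite neq_ltn kl.
    by left; rewrite /X fk.
  apply: eq_bigr => k Kk.
  rewrite [RHS]big_mkcond [RHS](bigID (fun l => f l != piv l)) /= [X in _ = _ * X]big1 ?mulr1 //.
  move=> l /negPn /eqP fl; case: ifP => // kl; apply: Ch1 => //.
    by rewrite neq_ltn kl.
  by right; rewrite /X fl.
pose ell k := `|A k (f k)| * (\prod_(l : 'I_N | l != k) `|kappa (piv l) - kappa (f k)|)
      / \prod_(l : 'I_N | l != k) `|kappa (piv l) - kappa (piv k)|.
have EX : \sum_(s < gtilde A piv) (mf A piv f s)%:R * phit_ kappa s x y t =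
    \sum_(k | f k != piv k) (xi kappa (f k) x y t - xi kappa (piv k) x y t + ln (ell k)).
  rewrite (eq_bigr (fun s => if mf A piv f s then phit_ kappa s x y t else 0)); last first.
    by move=> s _; case: (mf A piv f s); rewrite ?mul1r ?mul0r.
  rewrite -big_mkcond /=.
  rewrite -(big_rows _ (fun k => xi kappa (f k) x y t - xi kappa (piv k) x y t + ln (ell k)) gf).
  apply: eq_bigr => s ms; rewrite /phit_ /phi_ /phi0_ /= -(mfE _ ms).
  by [].
have Ell : forall k, f k != piv k -> expR (ln (ell k)) = A k (f k) * Lk X Y k.
  move=> k fk; have pos := Hs k fk.
  have -> : ell k = `|A k (f k) * Lk X Y k|.
    by rewrite /ell /Lk normrM normf_div !normr_prod mulrA.
  by rewrite ger0_norm ?ltW // lnK // posrE.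
have EA : \prod_(k | f k != piv k) (A k (f k) * Lk X Y k) =
    (\prod_k A k (f k)) * \prod_k Lk X Y k.
  rewrite big_split /= [X in _ = X * _](bigID (fun k => f k != piv k)) /=.
  rewrite [X in _ = _ * X * _]big1 ?mulr1; last by move=> k /negPn /eqP ->.
  rewrite [X in _ = _ * X](bigID (fun k => f k != piv k)) /=.
  rewrite [X in _ = _ * (_ * X)]big1 ?mulr1 //.
  by move=> k /negPn /eqP fk; apply: Lk1 => //; rewrite /X fk.
have Exi : \sum_k xi kappa (f k) x y t =
    \sum_k xi kappa (piv k) x y t + \sum_(k | f k != piv k) (xi kappa (f k) x y t - xi kappa (piv k) x y t).
  rewrite [X in _ = _ + X](eq_bigr (fun k => xi kappa (f k) x y t - xi kappa (piv k) x y t)) //.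
  rewrite [X in _ = _ + X]big_mkcond /=.
  rewrite (eq_bigr (fun k => xi kappa (piv k) x y t + (xi kappa (f k) x y t - xi kappa (piv k) x y t))); last first.
    by move=> k _; rewrite addrC subrK.
  rewrite big_split /=; congr (_ + _); apply: eq_bigr => k _.
  by case: ifP => // /negbFE /eqP ->; rewrite subrr.
rewrite /pivot_set E_reindex // /Gf /term EC EX Exi.
rewrite [\sum_(k | _) (_ + ln _)]big_split /=.
rewrite !expRD [expR (\sum_(k | _) ln _)]expR_sum (eq_bigr _ Ell) EA /Vd (core_id hY hX).
rewrite /Lk /Y.
set a := \prod_(k < N) A k (f k).
set v := \prod_(a < N) \prod_(b < N | _) (kappa (piv b) - kappa (piv a)).
set c := \prod_(k < N) \prod_(l < N | _) Ch X _ k l.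
set l := \prod_(k < N) (_ / _).
set e1 := expR (\sum_(k < N) _).
set e2 := expR (\sum_(k < N | _) _).
clearbody a v c l e1 e2.
by ring.
Qed.

Lemma f_unique (R : realType) N M (A : 'M[R]_(N, M)) (piv : 'I_N -> 'I_M)
  (f' : {ffun 'I_N -> 'I_M}) (k : 'I_N) (j : 'I_M) :
  injective piv -> j \notin pivot_set piv -> good A piv f' ->
  [set f' l | l : 'I_N] = [set (if l == k then j else piv l) | l : 'I_N] ->
  f' = [ffun l => if l == k then j else piv l].
Proof.
move=> pinj jnp /forallP gf E.
have inI : forall l, exists l', f' l = if l' == k then j else piv l'.
  move=> l; have : f' l \in [set f' l | l : 'I_N] by apply/imsetP; exists l.
  by rewrite E => /imsetP [l' _ ->]; exists l'.
have fP : forall l, f' l \in pivot_set piv -> f' l = piv l.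
  move=> l hl; case/orP: (gf l) => [/eqP //|/andP [h _]].
  by rewrite hl in h.
have finj : injective f'.
  have cf : #|[set f' l | l : 'I_N]| == #|'I_N|.
    rewrite E card_imset ?card_ord //.
    move=> a b; case: (a =P k) => [->|ak]; case: (b =P k) => [->|bk] //.
    + by move=> e; rewrite e piv_in in jnp.
    + by move=> e; rewrite -e piv_in in jnp.
    + by move/pinj.
  by move: cf => /imset_injP fi a b; apply: fi.
have fk : f' k = j.
  case: (inI k) => l'; case: (l' =P k) => // l'k e.
  have : f' k = piv k by apply: fP; rewrite e piv_in.
  by rewrite e => /pinj.
apply/ffunP => l; rewrite ffunE; case: (l =P k) => [-> //|lk].
case: (inI l) => l'; case: (l' =P k) => [_ e|l'k e].
  by move: lk; rewrite -fk in e; move/finj: e => ->.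
by apply: fP; rewrite e piv_in.
Qed.

Lemma E_I_ge0 (R : realType) M (kappa : 'I_M -> R) (I : {set 'I_M}) x y t :
  (forall i j : 'I_M, (i < j)%N -> kappa i < kappa j) -> 0 <= E_I kappa I x y t.
Proof.
move=> Hk; rewrite /E_I mulr_ge0 ?expR_ge0 //.
apply: prodr_ge0 => a _; apply: prodr_ge0 => b /andP [_ ab].
by rewrite subr_ge0 ltW // Hk.
Qed.

Lemma Vd_gt0 (R : realType) N M (kappa : 'I_M -> R) (piv : 'I_N -> 'I_M) :
  (forall i j : 'I_M, (i < j)%N -> kappa i < kappa j) ->
  (forall k l : 'I_N, (k < l)%N -> (piv k < piv l)%N) ->
  0 < Vd (fun k => kappa (piv k)).
Proof.
move=> Hk Hp; apply: prodr_gt0 => a _; apply: prodr_gt0 => b ab.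
by rewrite subr_gt0 Hk // Hp.
Qed.

Lemma sign_pos (R : realType) N M (kappa : 'I_M -> R) (A : 'M[R]_(N, M)) (piv : 'I_N -> 'I_M)
  (f : {ffun 'I_N -> 'I_M}) (x0 : 'I_M) :
  (forall i j : 'I_M, (i < j)%N -> kappa i < kappa j) ->
  (forall k l : 'I_N, (k < l)%N -> (piv k < piv l)%N) ->
  (forall k, A k (piv k) = 1) ->
  (forall k l : 'I_N, l != k -> A l (piv k) = 0) ->
  totally_nonnegative A ->
  good A piv f ->
  forall k, f k != piv k ->
     0 < A k (f k) * Lk (fun k => kappa (f k)) (fun k => kappa (piv k)) k.
Proof.
move=> Hk Hp H1 HA0 Htn gf k fk.
have gf' := gf; move/forallP: gf' => gfk.
have kinj := kappa_inj Hk; have pinj := mono_inj Hp.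
set X := fun k => kappa (f k); set Y := fun k => kappa (piv k).
have hY : forall k l, k != l -> Y k != Y l.
  by move=> a b ab; apply: contra ab => /eqP /kinj /pinj ->.
have hX : forall k l, k != l -> X k != Y l.
  move=> a b ab; case/orP: (gfk a) => [/eqP e|/andP [np _]].
    by rewrite /X e; apply: hY.
  apply: contra np => /eqP /kinj ->; exact: piv_in.
have /andP [jnp Aj] : (f k \notin pivot_set piv) && (A k (f k) != 0).
  by case/orP: (gfk k) => //; rewrite (negbTE fk).
set j := f k in jnp Aj *.
pose f0 : {ffun 'I_N -> 'I_M} := [ffun l => if l == k then j else piv l].
have f0inj : injective f0.
  move=> a b; rewrite !ffunE; case: (a =P k) => [->|ak]; case: (b =P k) => [->|bk] //.
  + by move=> e; rewrite e piv_in in jnp.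
  + by move=> e; rewrite -e piv_in in jnp.
  + by move/pinj.
have cI : #|[set f0 l | l : 'I_N]| = N by rewrite card_imset // card_ord.
have := @minor_E _ _ _ kappa A [set f0 l | l : 'I_N] 0 0 0 x0 cI.
rewrite (bigD1 f0) //= big1 ?addr0; last first.
  move=> f' /andP [/eqP E ne].
  case: (boolP (good A piv f')) => g'; last exact: (@Gf_bad _ _ _ kappa A piv 0 0 0 f' HA0 g').
  have : f' = f0.
    rewrite (@f_unique _ _ _ A piv f' k j) //.
    by rewrite E; apply/setP => z; apply/imsetP/imsetP => -[l _ ->]; exists l => //; rewrite ffunE.
  by move=> e; rewrite e eqxx in ne.
move=> EG.
have G0 : 0 <= Gf kappa A f0 0 0 0.
  by rewrite -EG; apply: mulr_ge0; [exact: Htn | exact: E_I_ge0].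
have hX0 : forall a b, a != b -> kappa (f0 a) != Y b.
  move=> a b ab; rewrite ffunE; case: (a =P k) => [ak|ak].
    by apply: contra jnp => /eqP /kinj ->; apply: piv_in.
  by apply: hY.
have C1 : \prod_(a < N) \prod_(b < N | (a < b)%N) Ch (fun a => kappa (f0 a)) Y a b = 1.
  apply: big1 => a _; apply: big1 => b ab; apply: (Ch1 hY hX0); first by rewrite neq_ltn ab.
  case: (a =P k) => [ak|ak]; last by left; rewrite ffunE; case: eqP.
  by right; rewrite ffunE; case: (b =P k) => // bk; rewrite bk ak ltnn in ab.
have L1 : \prod_(l < N) Lk (fun a => kappa (f0 a)) Y l = Lk X Y k.
  rewrite (bigD1 k) //= big1 ?mulr1; last first.
    by move=> l lk; apply: Lk1 => //; rewrite ffunE (negbTE lk).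
  by rewrite /Lk ffunE eqxx.
have A1 : \prod_(l < N) A l (f0 l) = A k j.
  rewrite (bigD1 k) //= big1 ?mulr1; last by move=> l lk; rewrite ffunE (negbTE lk) H1.
  by rewrite ffunE eqxx.
rewrite /Lk in L1.
move: G0; rewrite /Gf /Vd (core_id hY hX0) C1 L1 A1 mulr1.
have Vp := Vd_gt0 Hk Hp; rewrite /Vd in Vp.
move=> G0.
rewrite pmulr_lge0 ?expR_gt0 // mulrCA pmulr_rge0 // in G0.
rewrite lt_def andbC; apply/andP; split; first exact: G0.
by rewrite mulf_neq0 // Lk_ne0.
Qed.

Unset Implicit Arguments. Set Strict Implicit.

Theorem mainTheorem7 (R : realType) (N M : nat) (kappa : 'I_M -> R)
  (A : 'M[R]_(N, M)) (piv : 'I_N -> 'I_M) :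
  (N < M)%N ->
  (forall i j : 'I_M, (i < j)%N -> kappa i < kappa j) ->
  \rank A = N ->
  rref_with_pivots A piv ->
  totally_nonnegative A ->
  irreducible_rref A piv ->
  forall x y t : R,
    tau kappa A x y t / E_I kappa (pivot_set piv) x y t
    = theta_tilde (C_ kappa (A:=A) (piv:=piv)) (fun s => phit_ kappa s x y t).
Proof.
move=> hNM Hk _ [Hp H1 HA0 _] Htn _ x y t.
have M0 : (0 < M)%N by apply: leq_ltn_trans hNM.
pose x0 : 'I_M := Ordinal M0.
rewrite (@tau_E _ _ _ kappa A x y t x0).
rewrite (@sum_reduce _ _ _ kappa A piv x y t (E_I kappa (pivot_set piv) x y t) HA0); last first.
  move=> f gf; apply: Gf_good => //.
  exact: (@sign_pos _ _ _ kappa A piv f x0 Hk Hp H1 HA0 Htn gf).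
have E0 : E_I kappa (pivot_set piv) x y t != 0.
  rewrite /pivot_set E_reindex // mulf_neq0 //; last by rewrite gt_eqF // expR_gt0.
  by rewrite gt_eqF // Vd_gt0.
by rewrite theta_term [E_I _ _ _ _ _ * _]mulrC mulfK.
Qed.
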